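(* Let $n>1$ be an integer and $M := \langle x,y \mid (xy,\, y^nx)\rangle$. (1) $M$ is cancellative. (2) For all $k\in\mathbb{N}$, $x^ky =_M y^{n^k}x^k$. (3) For all $k\in\mathbb{N}^+$, $\rho_k(M) = n^{k-1}+k-1$. (4) The differences $\rho_k(M)-\rho_{k-1}(M)$ (for $k\ge 2$) are finite but unbounded.
   Context: $M$ is the monoid generated by $x,y$ subject to the single relation $xy = y^n x$; $\langle x,y\rangle$ is the free monoid on $x,y$. $|a|$ is word length; $a=_M b$ means equal images in $M$. $\mathsf{L}_M(a):=\{|b| : b\in\langle x,y\rangle,\ b=_M a\}$, $\mathcal{L}(M):=\{\mathsf{L}_M(a): a\in\langle x,y\rangle\}$. For $k\in\mathbb{N}$, $\mathcal{U}_k(M):=\bigcup\{L\in\mathcal{L}(M): k\in L\}$ and $\rho_k(M):=\sup\mathcal{U}_k(M)$. Cancellative: $ab=ac$ or $ba=ca$ implies $b=c$. *)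

(* Defs.v *)
From Stdlib Require Import List Arith Relations.
Import ListNotations.

Inductive letter : Type := X | Y.

Definition word := list letter.

Definition step (n : nat) (a b : word) : Prop :=
  exists u v : word, a = u ++ [X; Y] ++ v /\ b = u ++ repeat Y n ++ [X] ++ v.

Definition eqM (n : nat) : word -> word -> Prop :=
  clos_refl_sym_trans word (step n).

Definition cancellative (n : nat) : Prop :=
  forall a b c : word,
    (eqM n (a ++ b) (a ++ c) -> eqM n b c) /\
    (eqM n (b ++ a) (c ++ a) -> eqM n b c).

Definition LM (n : nat) (a : word) : nat -> Prop :=
  fun m => exists b : word, length b = m /\ eqM n b a.

Definition calL (n : nat) : (nat -> Prop) -> Prop :=
  fun L => exists a : word, L = LM n a.

Definition Uk (n k : nat) : nat -> Prop :=
  fun m => exists L, calL n L /\ L k /\ L m.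

Definition is_sup (S : nat -> Prop) (r : nat) : Prop :=
  (forall m, S m -> m <= r) /\ (forall b, (forall m, S m -> m <= b) -> r <= b).

(* Main.v *)
Require Import Defs.
From Stdlib Require Import List Arith Lia Relations.
Import ListNotations.

Fixpoint cx (w : word) : nat :=
  match w with [] => 0 | X :: w => S (cx w) | Y :: w => cx w end.
Fixpoint cy (w : word) : nat :=
  match w with [] => 0 | X :: w => cy w | Y :: w => S (cy w) end.
Fixpoint fw (n : nat) (w : word) : nat :=
  match w with [] => 0 | X :: w => n * fw n w | Y :: w => S (fw n w) end.

Lemma cx_app u v : cx (u ++ v) = cx u + cx v.
Proof. induction u as [|[] u IH]; simpl; lia. Qed.

Lemma fw_app n u v : fw n (u ++ v) = fw n u + n ^ (cx u) * fw n v.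
Proof.
  induction u as [|[] u IH]; simpl.
  - lia.
  - rewrite IH. rewrite Nat.mul_add_distr_l, Nat.mul_assoc. reflexivity.
  - rewrite IH. reflexivity.
Qed.

Lemma cx_repY m : cx (repeat Y m) = 0.
Proof. induction m; simpl; auto. Qed.
Lemma fw_repY n m : fw n (repeat Y m) = m.
Proof. induction m; simpl; auto. Qed.
Lemma cx_repX m : cx (repeat X m) = m.
Proof. induction m; simpl; auto. Qed.
Lemma fw_repX n m : fw n (repeat X m) = 0.
Proof. induction m; simpl; auto. rewrite IHm; lia. Qed.

Lemma step_inv n a b : step n a b -> cx a = cx b /\ fw n a = fw n b.
Proof.
  intros (u & v & -> & ->).
  rewrite !cx_app, !fw_app, ?cx_app, cx_repY, fw_repY. simpl.
  split; [lia|]. f_equal. f_equal. simpl. rewrite Nat.mul_succ_r. lia.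
Qed.

Lemma eqM_inv n a b : eqM n a b -> cx a = cx b /\ fw n a = fw n b.
Proof.
  induction 1.
  - apply step_inv; auto.
  - auto.
  - destruct IHclos_refl_sym_trans; auto.
  - destruct IHclos_refl_sym_trans1, IHclos_refl_sym_trans2; split; congruence.
Qed.

Lemma eqM_cong n a b u v : eqM n a b -> eqM n (u ++ a ++ v) (u ++ b ++ v).
Proof.
  induction 1.
  - apply rst_step. destruct H as (p & q & -> & ->).
    exists (u ++ p), (q ++ v). split; rewrite <- !app_assoc; reflexivity.
  - apply rst_refl.
  - apply rst_sym; auto.
  - eapply rst_trans; eauto.
Qed.

Lemma eqM_XY n a : eqM n (X :: repeat Y a) (repeat Y (n * a) ++ [X]).
Proof.
  induction a.
  - rewrite Nat.mul_0_r. apply rst_refl.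
  - eapply rst_trans.
    + apply rst_step. exists [], (repeat Y a). split; reflexivity.
    + rewrite Nat.mul_succ_r, Nat.add_comm, repeat_app, <- app_assoc.
      apply (eqM_cong n _ _ (repeat Y n) []) in IHa.
      rewrite !app_nil_r in IHa. exact IHa.
Qed.

Lemma eqM_nf n w : eqM n w (repeat Y (fw n w) ++ repeat X (cx w)).
Proof.
  induction w as [|[] w IH].
  - apply rst_refl.
  - simpl. eapply rst_trans.
    + apply (eqM_cong n _ _ [X] []) in IH. rewrite !app_nil_r in IH. exact IH.
    + pose proof (eqM_cong n _ _ [] (repeat X (cx w)) (eqM_XY n (fw n w))) as H.
      simpl in H. rewrite <- app_assoc in H. exact H.
  - simpl. apply (eqM_cong n _ _ [Y] []) in IH. rewrite !app_nil_r in IH. exact IH.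
Qed.

Lemma eqM_char n a b : cx a = cx b -> fw n a = fw n b -> eqM n a b.
Proof.
  intros H1 H2. eapply rst_trans. apply eqM_nf. rewrite H1, H2.
  apply rst_sym, eqM_nf.
Qed.

Lemma len_c w : length w = cx w + cy w.
Proof. induction w as [|[] w IH]; simpl; lia. Qed.

Lemma cy_le_f n w : 1 <= n -> cy w <= fw n w.
Proof. intros Hn. induction w as [|[] w IH]; simpl; nia. Qed.

Lemma pow_pos n m : 1 <= n -> 1 <= n ^ m.
Proof. intros H. induction m; simpl; nia. Qed.

Lemma f_le n w : 1 <= n -> fw n w <= cy w * n ^ (cx w).
Proof.
  intros Hn. induction w as [|[] w IH]; simpl.
  - lia.
  - nia.
  - pose proof (pow_pos n (cx w) Hn). nia.
Qed.

Lemma pow_ge n d : 2 <= n -> d + 1 <= n ^ d.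
Proof. intros H. induction d; simpl; [lia|]. pose proof (pow_pos n d). nia. Qed.

Lemma bound n k j : 2 <= n -> 1 <= k -> j <= k -> j + (k - j) * n ^ j <= n ^ (k - 1) + k - 1.
Proof.
  intros Hn Hk Hj.
  destruct (Nat.eq_dec j k) as [->|Hne].
  - pose proof (pow_pos n (k-1)). rewrite Nat.sub_diag. lia.
  - destruct (Nat.le_exists_sub (j+1) k) as [d [Hd _]]; [lia|].
    subst k. replace (d + (j + 1) - 1) with (j + d) by lia.
    replace (d + (j+1) - j) with (d + 1) by lia.
    rewrite Nat.pow_add_r. pose proof (pow_ge n d Hn). pose proof (pow_pos n j). nia.
Qed.

Lemma part2 n k : eqM n (repeat X k ++ Y :: nil) (repeat Y (n ^ k) ++ repeat X k).
Proof.
  apply eqM_char; rewrite ?cx_app, ?fw_app, ?cx_repX, ?cx_repY, ?fw_repX, ?fw_repY; simpl; lia.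
Qed.

Lemma part3 n k : 1 < n -> 1 <= k -> is_sup (Uk n k) (n ^ (k - 1) + k - 1).
Proof.
  intros Hn Hk. split.
  - intros m (L & (a & ->) & (b & Hb & Hba) & (c & Hc & Hca)).
    assert (H : eqM n c b) by (eapply rst_trans; [exact Hca| apply rst_sym; exact Hba]).
    apply eqM_inv in H as [H1 H2].
    pose proof (len_c c). pose proof (len_c b).
    pose proof (cy_le_f n c ltac:(lia)). pose proof (f_le n b ltac:(lia)).
    pose proof (bound n k (cx b) ltac:(lia) Hk ltac:(lia)).
    replace (k - cx b) with (cy b) in * by lia. lia.
  - intros b0 Hb0. apply Hb0.
    exists (LM n (repeat X (k-1) ++ [Y])). split; [eexists; reflexivity|]. split.
    + exists (repeat X (k-1) ++ [Y]). split; [rewrite length_app, repeat_length; simpl; lia| apply rst_refl].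
    + exists (repeat Y (n ^ (k-1)) ++ repeat X (k-1)). split.
      * rewrite length_app, !repeat_length; lia.
      * apply rst_sym, part2.
Qed.

Lemma sup_uniq S r r' : is_sup S r -> is_sup S r' -> r = r'.
Proof. intros [A B] [C D]. specialize (B r' C). specialize (D r A). lia. Qed.

Theorem lemma6p4 (n : nat) (hn : 1 < n) :
  cancellative n
  /\ (forall k : nat,
        eqM n (repeat X k ++ Y :: nil) (repeat Y (n ^ k) ++ repeat X k))
  /\ (forall k : nat, 1 <= k -> is_sup (Uk n k) (n ^ (k - 1) + k - 1))
  /\ ((forall k : nat, 1 <= k -> exists r : nat, is_sup (Uk n k) r)
      /\ (forall B : nat, exists k : nat, 2 <= k /\
            forall r r' : nat, is_sup (Uk n k) r -> is_sup (Uk n (k - 1)) r' ->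
              B < r - r')).
Proof.
  split; [|split; [apply part2|split; [intros; apply part3; auto|split]]].
  - intros a b c. split; intros H; apply eqM_inv in H as [H1 H2];
      rewrite !cx_app in H1; rewrite !fw_app in H2; apply eqM_char; try lia.
    + pose proof (pow_pos n (cx a) ltac:(lia)).
      apply Nat.mul_cancel_l with (p := n ^ cx a); lia.
    + assert (cx b = cx c) by lia. rewrite H in H2. lia.
  - intros k Hk. eexists. apply part3; auto.
  - intros B. exists (B + 2). split; [lia|]. intros r r' Hr Hr'.
    pose proof (sup_uniq _ _ _ Hr (part3 n (B+2) hn ltac:(lia))) as E1.
    pose proof (sup_uniq _ _ _ Hr' (part3 n (B+2-1) hn ltac:(lia))) as E2.
    subst. replace (B + 2 - 1) with (B + 1) by lia. replace (B + 1 - 1) with B by lia.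
    replace (n ^ (B+1)) with (n * n ^ B) by (rewrite Nat.add_1_r; reflexivity). pose proof (pow_ge n B ltac:(lia)). nia.
Qed.
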